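(* Let $\underline{L}$ be a finite lattice and let $\underline{S}_1,\underline{S}_2$ be intervals of $\underline{L}$ that are dismantling for $\underline{L}$, with $\underline{S}_2\not\subseteq\underline{S}_1$. Then $\underline{S}_2\setminus\underline{S}_1$ is an interval of the lattice $\underline{L}\setminus\underline{S}_1$ (the set $L\setminus S_1$ with the restricted order) and it is dismantling for $\underline{L}\setminus\underline{S}_1$.
   Context: For $u\le v$ in a lattice $L$, $[u,v]=\{x\mid u\le x\le v\}$, $(v]=\{x\mid x\le v\}$, $[u)=\{x\mid u\le x\}$. An interval $[u,v]$ of $L$ is quasi-dismantling for $L$ if $u$ is supremum-prime in $(v]$ (for all $x,y\in(v]$, $u\le x\vee y$ implies $u\le x$ or $u\le y$) and $v$ is infimum-prime in $[u)$ (for all $x,y\in[u)$, $x\wedge y\le v$ implies $x\le v$ or $y\le v$); it is dismantling for $L$ if moreover $u\neq\bot$ and $v\neq\top$, the least and greatest elements of $L$. (If $[u,v]$ is dismantling for $L$, then $L\setminus[u,v]$ with the restricted order is a lattice.) *)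

(* Defs.v *)
From HB Require Import structures.
From mathcomp Require Import all_boot all_order.
Set Implicit Arguments. Unset Strict Implicit. Unset Printing Implicit Defensive.
Import Order.Theory.
Local Open Scope order_scope.

Section Dismantling.
Context {d : Order.disp_t} {T : finTBLatticeType d}.

Definition itv (u v : T) : {set T} := [set x | (u <= x) && (x <= v)].

Definition sup_prime_below (u v : T) : Prop :=
  forall x y : T, x <= v -> y <= v -> u <= x `|` y -> u <= x \/ u <= y.

Definition inf_prime_above (u v : T) : Prop :=
  forall x y : T, u <= x -> u <= y -> x `&` y <= v -> x <= v \/ y <= v.

Definition quasi_dismantling (u v : T) : Prop :=
  u <= v /\ sup_prime_below u v /\ inf_prime_above u v.

Definition dismantling (u v : T) : Prop :=
  quasi_dismantling u v /\ u != \bot /\ v != \top.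

Definition is_sup_in (A : {set T}) (x y z : T) : Prop :=
  [/\ z \in A, x <= z, y <= z & forall w, w \in A -> x <= w -> y <= w -> z <= w].

Definition is_inf_in (A : {set T}) (x y z : T) : Prop :=
  [/\ z \in A, z <= x, z <= y & forall w, w \in A -> w <= x -> w <= y -> w <= z].

Definition itv_in (A : {set T}) (u v : T) : {set T} :=
  [set x in A | (u <= x) && (x <= v)].

Definition sup_prime_below_in (A : {set T}) (u v : T) : Prop :=
  forall x y z : T, x \in A -> y \in A -> x <= v -> y <= v ->
    is_sup_in A x y z -> u <= z -> u <= x \/ u <= y.

Definition inf_prime_above_in (A : {set T}) (u v : T) : Prop :=
  forall x y z : T, x \in A -> y \in A -> u <= x -> u <= y ->
    is_inf_in A x y z -> z <= v -> x <= v \/ y <= v.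

Definition is_bot_in (A : {set T}) (b : T) : Prop :=
  b \in A /\ forall x, x \in A -> b <= x.

Definition is_top_in (A : {set T}) (t : T) : Prop :=
  t \in A /\ forall x, x \in A -> x <= t.

Definition quasi_dismantling_in (A : {set T}) (u v : T) : Prop :=
  [/\ u \in A, v \in A, u <= v, sup_prime_below_in A u v & inf_prime_above_in A u v].

Definition dismantling_in (A : {set T}) (u v : T) : Prop :=
  [/\ quasi_dismantling_in A u v, ~ is_bot_in A u & ~ is_top_in A v].

End Dismantling.

(* Main.v *)
Require Import Defs.
From HB Require Import structures.
From mathcomp Require Import all_boot all_order.
Import Order.Theory.
Local Open Scope order_scope.

Section Aux.
Context {d : Order.disp_t} {T : finTBLatticeType d}.

Lemma exists_min (D : {set T}) x0 : x0 \in D ->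
  (forall x y, x \in D -> y \in D -> x `&` y \in D) ->
  exists2 u, u \in D & forall x, x \in D -> u <= x.
Proof.
move=> Dx0 cl; exists (x0 `&` \meet_(i in D) i).
  pose P y := x0 `&` y \in D.
  have : P (\meet_(i in D) i).
    apply: (big_ind P) => [|a b Pa Pb|i Di]; rewrite /P.
    - by rewrite meetx1.
    - by rewrite -[x0](meetxx x0) -meetA [X in _ `&` X]meetC -!meetA meetA (meetC b x0); apply: cl.
    - exact: cl.
  by [].
move=> x Dx; apply: leIxr; exact: (meets_inf (fun i => i) Dx).
Qed.

Lemma exists_max (D : {set T}) x0 : x0 \in D ->
  (forall x y, x \in D -> y \in D -> x `|` y \in D) ->
  exists2 u, u \in D & forall x, x \in D -> x <= u.
Proof.
move=> Dx0 cl; exists (x0 `|` \join_(i in D) i).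
  pose P y := x0 `|` y \in D.
  have : P (\join_(i in D) i).
    apply: (big_ind P) => [|a b Pa Pb|i Di]; rewrite /P.
    - by rewrite joinx0.
    - by rewrite -[x0](joinxx x0) -joinA [X in _ `|` X]joinC -!joinA joinA (joinC b x0); apply: cl.
    - exact: cl.
  by [].
move=> x Dx; apply: lexUr; exact: (joins_sup (fun i => i) Dx).
Qed.

End Aux.

Theorem lemma5 (d : Order.disp_t) (T : finTBLatticeType d) (u1 v1 u2 v2 : T) :
  dismantling u1 v1 -> dismantling u2 v2 ->
  ~~ (itv u2 v2 \subset itv u1 v1) ->
  exists u v : T,
    itv_in (~: itv u1 v1) u v = itv u2 v2 :\: itv u1 v1 /\
    dismantling_in (~: itv u1 v1) u v.
Proof.
move=> [[le1 [sp1 ip1]] [b1 t1]] [[le2 [sp2 ip2]] [b2 t2]] nsub.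
set A := ~: itv u1 v1.
set D := itv u2 v2 :\: itv u1 v1.
have inA x : (x \in A) = ~~ ((u1 <= x) && (x <= v1)) by rewrite !inE.
have inD x : (x \in D) = ~~ ((u1 <= x) && (x <= v1)) && ((u2 <= x) && (x <= v2)).
  by rewrite !inE.
have AU x y : x \in A -> y \in A -> x `|` y \in A.
  rewrite !inA => hx hy; apply/negP => /andP [h1 h2].
  move: h2; rewrite leUx => /andP [xv yv].
  case: (sp1 x y xv yv h1) => h.
    by move: hx; rewrite h xv.
  by move: hy; rewrite h yv.
have AI x y : x \in A -> y \in A -> x `&` y \in A.
  rewrite !inA => hx hy; apply/negP => /andP [h1 h2].
  move: h1; rewrite lexI => /andP [ux uy].
  case: (ip1 x y ux uy h2) => h.
    by move: hx; rewrite h ux.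
  by move: hy; rewrite h uy.
have DA x : x \in D -> x \in A by rewrite inD inA => /andP [].
have DS x : x \in D -> (u2 <= x) && (x <= v2) by rewrite inD => /andP [].
have DI x y : x \in D -> y \in D -> x `&` y \in D.
  move=> hx hy; have := AI x y (DA x hx) (DA y hy); rewrite inA inD => ->.
  move: (DS x hx) (DS y hy) => /andP [a b] /andP [c e].
  by rewrite lexI a c (le_trans (leIl x y) b).
have DU x y : x \in D -> y \in D -> x `|` y \in D.
  move=> hx hy; have := AU x y (DA x hx) (DA y hy); rewrite inA inD => ->.
  move: (DS x hx) (DS y hy) => /andP [a b] /andP [c e].
  by rewrite leUx b e (le_trans a (leUl x y)).
have [x0 Dx0] : exists x0, x0 \in D.
  case/subsetPn: nsub => x h1 h2; exists x; by rewrite inE h1 h2.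
have [u Du umin] := exists_min _ _ Dx0 DI.
have [v Dv vmax] := exists_max _ _ Dx0 DU.
move: (DS u Du) (DS v Dv) => /andP [u2u uv2] /andP [u2v vv2].
have inD' x : x \in A -> u2 <= x -> x <= v2 -> x \in D.
  by move=> hA a b; rewrite inD -inA hA a b.
exists u, v; split.
  apply/setP => x; rewrite /itv_in inE; apply/idP/idP.
    move=> /andP [hA /andP [a b]]; apply: inD' => //.
      exact: le_trans u2u a.
    exact: le_trans b vv2.
  move=> Dx; by rewrite (DA x Dx) umin ?vmax.
split.
- split.
  + exact: DA.
  + exact: DA.
  + exact: umin.
  + move=> x y z xA yA xv yv [zA xz yz zmin] uz.
    have uxy : u <= x `|` y.
      have := zmin _ (AU x y xA yA) (leUl x y) (leUr y x). move=> H. exact: le_trans uz H.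
    have := sp2 x y (le_trans xv vv2) (le_trans yv vv2) (le_trans u2u uxy).
    case=> h; [left|right]; apply: umin; apply: inD' => //.
      exact: le_trans xv vv2.
      exact: le_trans yv vv2.
  + move=> x y z xA yA ux uy [zA zx zy zmax] zv.
    have xyv : x `&` y <= v.
      by apply: le_trans _ zv; apply: zmax (AI x y xA yA) (leIl x y) (leIr y x).
    have := ip2 x y (le_trans u2u ux) (le_trans u2u uy) (le_trans xyv vv2).
    case=> h; [left|right]; apply: vmax; apply: inD' => //.
      exact: le_trans u2u ux.
      exact: le_trans u2u uy.
- move=> [_ h].
  have bA : (\bot : T) \in A by rewrite inA lex0 (negbTE b1).
  have := h _ bA; rewrite lex0 => /eqP ub.
  by move: u2u; rewrite ub lex0 (negbTE b2).
- move=> [_ h].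
  have tA : (\top : T) \in A by rewrite inA le1x (negbTE t1) andbF.
  have := h _ tA; rewrite le1x => /eqP vt.
  by move: vv2; rewrite vt le1x (negbTE t2).
Qed.
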